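(* Let $\mathcal H$ be a real Hilbert space and $1\le p<2$. Let $J:\mathcal H\to\mathbb R\cup\{\infty\}$ be convex, lower semicontinuous, proper, with dense effective domain, and absolutely $p$-homogeneous ($J(cu)=|c|^pJ(u)$ for all $c\neq0$, $u\in\mathcal H$, and $J(0)=0$), and assume $\lambda_1:=\inf_{u\in\mathcal H_0}\frac{pJ(u)}{\|u\|^p}>0$. Let $f\in\mathcal H_0$ and let $u$ solve the gradient flow $\partial_t u+\partial J(u)\ni 0$, $u(0)=f$. Then the extinction time satisfies $$T_{\mathrm{ex}}\le \frac{\|f\|^{2-p}}{(2-p)\lambda_1}<\infty.$$
   Context: $\langle\cdot,\cdot\rangle$ and $\|\cdot\|$ denote the inner product and norm of $\mathcal H$. The subdifferential is $\partial J(u)=\{\zeta\in\mathcal H: J(u)+\langle\zeta,v-u\rangle\le J(v)\ \forall v\in\mathcal H\}$. $\mathcal N(J)=\{u:J(u)=0\}$ and $\mathcal H_0:=\mathcal N(J)^\perp\setminus\{0\}$. The gradient flow is understood in Brezis' sense: the unique continuous $u:[0,\infty)\to\mathcal H$, Lipschitz on $[\delta,\infty)$ for every $\delta>0$, right-differentiable on $(0,\infty)$, with $u(0)=f$ and $\partial_t^+u(t)=-\zeta(t)$, where $\zeta(t)$ is the minimal-norm element of $\partial J(u(t))$. The extinction time is $T_{\mathrm{ex}}:=\inf\{T>0: u(t)=0\ \forall t\ge T\}\in(0,\infty]$. *)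

(* Defs.v *)
From HB Require Import structures.
From mathcomp Require Import all_boot all_order all_algebra.
From mathcomp Require Import all_classical all_reals all_analysis.
Set Implicit Arguments. Unset Strict Implicit. Unset Printing Implicit Defensive.
Import Order.TTheory GRing.Theory Num.Theory.
Import numFieldNormedType.Exports.
Local Open Scope classical_set_scope.
Local Open Scope ring_scope.

(* A real Hilbert space: a complete normed space V over R whose norm comes
   from the (real) inner product ip. *)
Definition is_inner_product (R : realType) (V : normedModType R)
    (ip : V -> V -> R) : Prop :=
  [/\ (forall x y, ip x y = ip y x),
      (forall x y z, ip (x + y) z = ip x z + ip y z),
      (forall (a : R) x y, ip (a *: x) y = a * ip x y) &
      (forall x, ip x x = `|x| ^+ 2)].

Section Defs.
Context {R : realType} {V : normedModType R}.
Local Open Scope ereal_scope.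

Definition convex_fun (J : V -> \bar R) : Prop :=
  forall x y : V, forall t : R, (0 <= t <= 1)%R ->
    J (t *: x + (1 - t) *: y)%R <= t%:E * J x + (1 - t)%:E * J y.

Definition proper_fun (J : V -> \bar R) : Prop :=
  (forall x, J x != -oo) /\ exists x, J x < +oo.

Definition dom (J : V -> \bar R) : set V := [set x | J x < +oo].

Definition abs_homogeneous (p : R) (J : V -> \bar R) : Prop :=
  (forall (c : R) x, c != 0%R -> J (c *: x)%R = (`|c| `^ p)%:E * J x) /\ J 0%R = 0.

Definition nullJ (J : V -> \bar R) : set V := [set u | J u = 0].

Definition orth (ip : V -> V -> R) (A : set V) : set V :=
  [set v | forall w, A w -> ip v w = 0%R].

Definition H0 (ip : V -> V -> R) (J : V -> \bar R) : set V :=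
  orth ip (nullJ J) `\ 0%R.

Definition lambda1 (ip : V -> V -> R) (p : R) (J : V -> \bar R) : \bar R :=
  ereal_inf [set (p%:E * J u) * ((`|u| `^ p)^-1)%R%:E | u in H0 ip J].

Definition subdiff (ip : V -> V -> R) (J : V -> \bar R) (u : V) : set V :=
  [set z | forall v, J u + (ip z (v - u)%R)%:E <= J v].

Definition min_norm_subgrad (ip : V -> V -> R) (J : V -> \bar R) (u z : V) : Prop :=
  subdiff ip J u z /\ (forall w, subdiff ip J u w -> (`|z| <= `|w|)%R).

(* Brezis solution of the gradient flow  u' + dJ(u) ∋ 0, u(0) = f
   (only the values of u on [0, +oo) matter). *)
Definition brezis_flow (ip : V -> V -> R) (J : V -> \bar R) (f : V)
    (u : R -> V) : Prop :=
  [/\ u 0%R = f,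
      {within `[0%R, +oo[, continuous u},
      (forall delta : R, (0 < delta)%R -> exists L : R,
          forall s t : R, (delta <= s)%R -> (delta <= t)%R ->
            (`|u s - u t| <= L * `|s - t|)%R) &
      (forall t : R, (0 < t)%R -> exists z : V,
          min_norm_subgrad ip J (u t) z /\
          (fun h : R => h^-1 *: (u (t + h) - u t))%R @ 0%R^'+ --> (- z)%R)].

Definition Tex (u : R -> V) : \bar R :=
  ereal_inf [set T%:E | T in [set T : R | (0 < T)%R /\
                                forall t, (T <= t)%R -> u t = 0%R]].
End Defs.

(* Main.v *)
Require Import Defs.
From HB Require Import structures.
From mathcomp Require Import all_boot all_order all_algebra.
From mathcomp Require Import all_classical all_reals all_analysis.
From mathcomp Require Import ring lra.
Set Implicit Arguments. Unset Strict Implicit. Unset Printing Implicit Defensive.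
Import Order.TTheory GRing.Theory Num.Theory.
Import numFieldNormedType.Exports.
Local Open Scope classical_set_scope.
Local Open Scope ring_scope.

Lemma andP_intro (x y : bool) : x -> y -> x && y.
Proof. by move=> -> ->. Qed.

Lemma lra1 (R : realFieldType) (a b c d e : R) :
  a - b < e / 2 -> d - c <= 0 -> b <= d -> 0 < e -> a - c < e.
Proof. move=> *; lra. Qed.

Lemma lra2 (R : realFieldType) (A B E X : R) :
  B - A < E -> 0 <= X -> B <= A + X + E.
Proof. move=> *; lra. Qed.
Lemma lra3 (R : realFieldType) (P Q W Gs Gsh : R) :
  P - Q <= W -> Q <= Gs -> Gsh - Gs = W -> P <= Gsh.
Proof. move=> *; lra. Qed.

Section Main.
Variable R : realType.

Lemma ge_min_l (x y : R) : Num.min x y <= x. Proof. by rewrite ge_min lexx. Qed.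
Lemma ge_min_r (x y : R) : Num.min x y <= y. Proof. by rewrite ge_min lexx orbT. Qed.

Lemma within_eps (g : R -> R) (A : set R) x : g @ within A (nbhs x) --> g x ->
  forall e, 0 < e -> exists2 d, 0 < d & forall y, A y -> `|x - y| < d -> `|g x - g y| < e.
Proof.
move=> /cvgrPdist_lt H e e0; have := H e e0.
rewrite near_withinE => /nbhs_ballP [d /= d0 Hd].
by exists d => // y Ay xy; apply: Hd.
Qed.

Arguments within_eps {g A x} _ e _.

Lemma right_ex (P : R -> Prop) d : 0 < d -> (\forall h \near 0^'+, P h) ->
  exists h, [/\ 0 < h, h < d & P h].
Proof.
move=> d0 HP.
have : \forall h \near (0:R)^'+, [/\ 0 < h, h < d & P h].
  near=> h; split.
  - by near: h; exact: nbhs_right_gt.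
  - by near: h; exact: nbhs_right_lt.
  - by near: h.
by move/filter_ex.
Unshelve. all: by end_near. Qed.

Lemma dini (g : R -> R) a b : a < b ->
  (forall x, a <= x <= b -> g @ within [set y | a <= y <= b] (nbhs x) --> g x) ->
  (forall t, a < t < b -> forall e, 0 < e ->
     \forall h \near 0^'+, g (t + h) - g t <= e * h) ->
  g b <= g a.
Proof.
move=> ab C D.
apply/ler_addgt0Pr => e0 e0gt.
have ba1 : 0 < b - a + 1 by rewrite addr_gt0 // subr_gt0.
pose e := e0 / (b - a + 1).
have egt : 0 < e by rewrite divr_gt0.
have -> : e0 = e * (b - a) + e by rewrite /e; field; rewrite gt_eqF.
pose G s := g a + e * (s - a) + e.
pose S := [set s | a <= s <= b /\ g s <= G s].
have Sa : S a.
  by split; [rewrite lexx ltW | rewrite /G subrr mulr0 addr0 lerDl ltW].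
have hS : has_sup S.
  split; first by exists a.
  by exists b => y [/andP[]].
pose s := sup S.
have as_ : a <= s by apply: sup_upper_bound.
have sb : s <= b by apply: ge_sup; [exists a | move=> y [/andP[]]].
have Gdiff : forall x y, G x - G y = e * (x - y).
  by move=> x y; rewrite /G; ring.
have Ss : g s <= G s.
  rewrite leNgt; apply/negP => H.
  pose c := g s - G s.
  have c0 : 0 < c by rewrite subr_gt0.
  have [d1 d10 Hd1] := within_eps (C s (andP_intro as_ sb)) (c / 2) ltac:(by rewrite divr_gt0).
  pose d := Num.min d1 (c / (2 * e)).
  have d0 : 0 < d by rewrite lt_min d10 divr_gt0 // mulr_gt0.
  have [y Sy sy] := sup_adherent d0 hS.
  have ys : y <= s by apply: sup_upper_bound.
  have [/andP[ay yb] gy] := Sy.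
  have nsy : `|s - y| < d by rewrite ger0_norm ?subr_ge0 // ltrBlDr addrC -ltrBlDr.
  have := Hd1 y (andP_intro ay yb) (lt_le_trans nsy (ge_min_l _ _)).
  have : `|s - y| < c / (2 * e) := lt_le_trans nsy (ge_min_r _ _).
  rewrite ger0_norm ?subr_ge0 // => h1 h2.
  have h3 := le_lt_trans (ler_norm _) h2.
  have h4 : G y - G s <= 0.
    by rewrite Gdiff pmulr_rle0 // subr_le0.
  have : g s - G s < c.
    exact: lra1 h3 h4 gy c0.
  by rewrite ltxx.
have [sb'|sb'] := eqVneq s b; first by rewrite -sb' addrA.
have {sb sb'} sb : s < b by rewrite lt_neqAle sb' sb.
exfalso.
have [as'|as'] := eqVneq a s.
  have [d d0 Hd] := within_eps (C a (andP_intro (lexx a) (ltW ab))) e egt.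
  pose y := Num.min b (a + d / 2).
  have ay : a < y by rewrite lt_min ab ltrDl divr_gt0.
  have yb : y <= b by apply: ge_min_l.
  have ny : `|a - y| < d.
    rewrite ltr0_norm ?subr_lt0 // opprB ltrBlDl.
    apply: (le_lt_trans (ge_min_r _ _)).
    by rewrite ltrD2l ltr_pdivrMr // ltr_pMr // ltr1n.
  have Sy : S y.
    split; first by rewrite (ltW ay).
    have := Hd y (andP_intro (ltW ay) yb) ny; rewrite distrC.
    move/(le_lt_trans (ler_norm _)).
    rewrite /G => h.
    have : 0 <= e * (y - a) by rewrite mulr_ge0 ?(ltW egt) // subr_ge0 ltW.
    exact: lra2 h.
  have := sup_upper_bound hS Sy; rewrite -/s -as' => h.
  by move: (lt_le_trans ay h); rewrite ltxx.
have {as' as_} as_ : a < s by rewrite lt_neqAle as' as_.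
have [h [h0 hb gh]] := right_ex (ltac:(by rewrite subr_gt0) : 0 < b - s) (D s (andP_intro as_ sb) e egt).
have Sh : S (s + h).
  split.
    rewrite (ltW (lt_le_trans as_ (ler_wpDr (ltW h0) (lexx s)))).
    by rewrite -lerBrDl ltW.
  have := Gdiff (s + h) s.
  have -> : s + h - s = h by ring.
  exact: lra3 gh Ss.
have := sup_upper_bound hS Sh; rewrite -/s.
by rewrite gerDl leNgt h0.
Qed.
Lemma bernoulli_concave (x q : R) : 0 < x -> 0 <= q <= 1 ->
  x `^ q <= 1 + q * (x - 1).
Proof.
move=> x0 /andP[q0 q1].
have [->|q0'] := eqVneq q 0; first by rewrite powRr0 mul0r addr0.
have [->|q1'] := eqVneq q 1; first by rewrite powRr1 ?(ltW x0) // mul1r addrC subrK.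
have qp : 0 < q by rewrite lt_neqAle eq_sym q0' q0.
have qlt : q < 1 by rewrite lt_neqAle q1' q1.
have h := @conjugate_powR R (x `^ q) 1 q^-1 (1 - q)^-1 (powR_ge0 _ _) ler01
  (ltac:(by rewrite invr_gt0)) (ltac:(by rewrite invr_gt0 subr_gt0)).
rewrite !invrK in h.
have /h : q + (1 - q) = 1 by ring.
rewrite mulr1 -powRrM mulfV ?gt_eqF // powRr1 ?(ltW x0) // powR1 => H.
have -> : 1 + q * (x - 1) = x * q + 1 * (1 - q) by ring.
exact: H.
Qed.

Lemma rdiff_le (g : R -> R) t L e :
  (fun h => h^-1 * (g (t + h) - g t)) @ 0^'+ --> L -> L < e ->
  \forall h \near 0^'+, g (t + h) - g t <= e * h.
Proof.
move=> /cvgrPdist_lt H Le.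
have := H (e - L) ltac:(by rewrite subr_gt0).
move=> H1; near=> h.
have h0 : 0 < h by near: h; exact: nbhs_right_gt.
have := near H1 h => /(_ ltac:(by [])).
rewrite distrC => /(le_lt_trans (ler_norm _)) H2.
rewrite mulrC -ler_pdivrMl //.
move: H2; lra.
Unshelve. all: by end_near. Qed.

Lemma powR_concave (a b q : R) : 0 < a -> 0 < b -> 0 <= q <= 1 ->
  b `^ q - a `^ q <= q * (a `^ q / a) * (b - a).
Proof.
move=> a0 b0 hq.
have hb := bernoulli_concave (divr_gt0 b0 a0) hq.
have E : b `^ q = a `^ q * (b / a) `^ q.
  by rewrite -powRM ?ltW ?divr_gt0 // mulrC divfK ?gt_eqF.
rewrite E.
have ha := powR_gt0 q a0.
have h : a `^ q * (b / a) `^ q <= a `^ q * (1 + q * (b / a - 1)).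
  by rewrite ler_pM2l.
have -> : q * (a `^ q / a) * (b - a) = a `^ q * (q * (b / a - 1)).
  by field; rewrite gt_eqF.
move: h; lra.
Qed.

Lemma powR_cont (q x : R) : 0 < x -> {for x, continuous (fun y : R => y `^ q)}.
Proof.
move=> x0; apply: differentiable_continuous; rewrite -derivable1_diffP.
by apply: derivable_powR; rewrite in_itv /= andbT.
Qed.

Variables (V : normedModType R) (ip : V -> V -> R).
Variables (p : R) (J : V -> \bar R) (f : V) (u : R -> V).
Hypothesis hip : is_inner_product ip.
Hypothesis hp : 1 <= p < 2.
Hypothesis hconv : convex_fun J.
Hypothesis hprop : proper_fun J.
Hypothesis hhom : abs_homogeneous p J.
Hypothesis hl : (0 < lambda1 ip p J)%E.
Hypothesis hf : H0 ip J f.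
Hypothesis hu : brezis_flow ip J f u.

Lemma ipC x y : ip x y = ip y x. Proof. by case: hip. Qed.
Lemma ipDl x y z : ip (x + y) z = ip x z + ip y z. Proof. by case: hip. Qed.
Lemma ipZl a x y : ip (a *: x) y = a * ip x y. Proof. by case: hip. Qed.
Lemma ipxx x : ip x x = `|x| ^+ 2. Proof. by case: hip. Qed.
Lemma ipDr x y z : ip x (y + z) = ip x y + ip x z.
Proof. by rewrite ipC ipDl ipC (ipC z). Qed.
Lemma ipZr a x y : ip x (a *: y) = a * ip x y.
Proof. by rewrite ipC ipZl ipC. Qed.
Lemma ip0l y : ip 0 y = 0.
Proof. by rewrite -(scale0r (0 : V)) ipZl mul0r. Qed.
Lemma ip0r y : ip y 0 = 0.
Proof. by rewrite ipC ip0l. Qed.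
Lemma ipNl x y : ip (- x) y = - ip x y.
Proof. by rewrite -scaleN1r ipZl mulN1r. Qed.
Lemma ipNr x y : ip x (- y) = - ip x y.
Proof. by rewrite ipC ipNl ipC. Qed.
Lemma ipBl x y z : ip (x - y) z = ip x z - ip y z.
Proof. by rewrite ipDl ipNl. Qed.
Lemma ipBr x y z : ip x (y - z) = ip x y - ip x z.
Proof. by rewrite ipDr ipNr. Qed.

Lemma ip_polar x y : ip x y = (`|x + y| ^+ 2 - `|x| ^+ 2 - `|y| ^+ 2) / 2.
Proof.
rewrite -!ipxx ipDl !ipDr (ipC y x).
by field.
Qed.

Lemma ip_cvg T (F : set_system T) (FF : Filter F) (X Y : T -> V) x y :
  X t @[t --> F] --> x -> Y t @[t --> F] --> y ->
  ip (X t) (Y t) @[t --> F] --> ip x y.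
Proof.
move=> hX hY.
have -> : (fun t => ip (X t) (Y t)) =
   (fun t => (`|X t + Y t| * `|X t + Y t| - `|X t| * `|X t| - `|Y t| * `|Y t|) * 2^-1).
  by apply/funext => t; rewrite ip_polar !expr2.
rewrite ip_polar !expr2.
have hXY : X t + Y t @[t --> F] --> x + y by apply: cvgD.
apply: cvgM; last exact: cvg_cst.
apply: cvgB; [apply: cvgB|]; apply: cvgM; apply: cvg_norm => //.
Qed.

Lemma J0 : J 0 = 0%E. Proof. by case: hhom. Qed.

Lemma J_scale c x : c != 0 -> J (c *: x) = ((`|c| `^ p)%:E * J x)%E.
Proof. by case: hhom => h _; apply: h. Qed.

Lemma J_neg x : J (- x) = J x.
Proof.
by rewrite -scaleN1r J_scale ?oppr_eq0 ?oner_eq0 // normrN1 powR1 mul1e.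
Qed.

Lemma J_ge0 x : (0 <= J x)%E.
Proof.
have := hconv x (- x) (t:=2^-1) ltac:(by rewrite invr_ge0 ler0n invf_le1 ?ler1n).
have -> : 2^-1 *: x + (1 - 2^-1) *: - x = 0 :> V.
  by rewrite scalerN -scalerBl (_ : 2^-1 - (1 - 2^-1) = 0 :> R) ?scale0r //; field.
rewrite J0 J_neg.
case: hprop => hninf _.
case E: (J x) => [r| |] //.
  rewrite -!EFinM -EFinD lee_fin => h.
  rewrite lee_fin; suff <- : 2^-1 * r + (1 - 2^-1) * r = r by [].
  by field.
by have := hninf x; rewrite E.
Qed.

Lemma subdiff_fin x z : subdiff ip J x z -> exists r, J x = r%:E /\ 0 <= r.
Proof.
move=> hz; case: hprop => hninf [x0 hx0].
have := hz x0.
have := J_ge0 x.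
case E: (J x) => [r| |] //.
  by move=> h _; exists r; split => //; rewrite -lee_fin.
move=> _; rewrite addye // => h.
by move: (le_lt_trans h hx0); rewrite ltxx.
Qed.

Lemma J_null_scale c n : J n = 0%E -> J (c *: n) = 0%E.
Proof.
move=> hn; have [->|c0] := eqVneq c 0; first by rewrite scale0r J0.
by rewrite J_scale // hn mule0.
Qed.

Lemma two_powR : 2 <= 2 `^ p :> R.
Proof.
case/andP: hp => p1 _.
have := @ler_powR R 2 ltac:(by rewrite ler1n) 1 p p1.
by rewrite powRr1 // ler0n.
Qed.

Lemma subdiff_orth x z n : subdiff ip J x z -> J n = 0%E -> ip z n = 0.
Proof.
move=> hz hn.
have [r [Jx r0]] := subdiff_fin hz.
pose K := 2 `^ p * r / 2.
have key : forall s, r + s * ip z n <= K.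
  move=> s.
  have h1 := hz (x + s *: n).
  have E0 : x + s *: n - x = s *: n by rewrite addrC addKr.
  rewrite E0 in h1.
  have h2 := hconv (2 *: x) ((2 * s) *: n) (t:=2^-1)
    ltac:(by rewrite invr_ge0 ler0n invf_le1 ?ler1n).
  have E : 2^-1 *: (2 *: x) + (1 - 2^-1) *: ((2 * s) *: n) = x + s *: n.
    rewrite !scalerA (_ : 2^-1 * 2 = 1 :> R); last by field.
    rewrite (_ : (1 - 2^-1) * (2 * s) = s :> R); last by field.
    by rewrite scale1r.
  rewrite E (J_null_scale (2 * s) hn) mule0 adde0 J_scale ?pnatr_eq0 // ger0_norm ?ler0n // in h2.
  have := le_trans h1 h2.
  by rewrite Jx ipZr -EFinD -!EFinM lee_fin /K [X in _ <= X]mulrC.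
have [w0|w0] := eqVneq (ip z n) 0 => //.
have := key ((K - r + 1) / ip z n).
rewrite divfK //.
lra.
Qed.

Lemma subdiff_euler x z r : subdiff ip J x z -> J x = r%:E -> p * r <= ip z x.
Proof.
move=> hz Jx.
have r0 : 0 <= r by rewrite -lee_fin -Jx J_ge0.
case/andP: hp => p1 p2.
have key : forall c, 0 < c < 1 -> r + (p - 1) * r * c <= (ip z x).
  move=> c /andP[c0 c1].
  have h1 := hz (c *: x).
  rewrite (J_scale x (lt0r_neq0 c0)) Jx (ger0_norm (ltW c0)) in h1.
  have E1 : c *: x - x = (c - 1) *: x by rewrite scalerBl scale1r.
  rewrite E1 in h1.
  rewrite ipZr -EFinD -EFinM lee_fin in h1.
  have hb := @bernoulli_concave c (p - 1) c0 ltac:(apply/andP; split; lra).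
  have hcp : c `^ p = c * c `^ (p - 1) by rewrite mulr_powRB1 // ?ltW // (lt_le_trans ltr01 p1).
  rewrite hcp in h1.
  have h3 : c * c `^ (p - 1) * r <= c * (1 + (p - 1) * (c - 1)) * r.
    by apply: ler_wpM2r => //; apply: ler_wpM2l => //; apply: ltW.
  have h4 := le_trans h1 h3.
  have : (1 - c) * (r + (p - 1) * r * c) <= (1 - c) * (ip z x).
    move: h4; nra.
  by rewrite ler_pM2l // subr_gt0.
have K0 : 0 <= (p - 1) * r by rewrite mulr_ge0 // subr_ge0.
have kh := key 2^-1 ltac:(by rewrite invr_gt0 ltr0n invf_lt1 ?ltr0n ?ltr1n).
rewrite leNgt; apply/negP => hI.
have Kpos : 0 < (p - 1) * r by move: hI kh; lra.
pose c := 1 - (p * r - (ip z x)) / (2 * ((p - 1) * r)).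
have := key c.
have hc0 : (p * r - (ip z x)) / (2 * ((p - 1) * r)) <= 4^-1.
  rewrite ler_pdivrMr ?mulr_gt0 //; move: kh; nra.
have hc1 : 0 < (p * r - (ip z x)) / (2 * ((p - 1) * r)).
  by apply: divr_gt0; [rewrite subr_gt0 | apply: mulr_gt0].
have /[swap]/[apply] : 0 < c < 1.
  apply/andP; split; rewrite /c; lra.
rewrite /c.
have -> : r + (p - 1) * r * (1 - (p * r - (ip z x)) / (2 * ((p - 1) * r))) =
   p * r - (p * r - (ip z x)) / 2.
  by field; apply/andP; split; apply/eqP => h0; move: Kpos; rewrite h0 ?mulr0 ?mul0r ltxx.
lra.
Qed.


Lemma u0 : u 0 = f. Proof. by case: hu. Qed.
Lemma ucont : {within `[0, +oo[, continuous u}. Proof. by case: hu. Qed.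
Lemma uder t : 0 < t -> exists z, min_norm_subgrad ip J (u t) z /\
   (fun h => h^-1 *: (u (t + h) - u t)) @ 0^'+ --> - z.
Proof. by case: hu => _ _ _; apply. Qed.

Lemma ucont_ab (a b : R) : 0 <= a -> forall x : R, a <= x <= b ->
  u @ within [set y | a <= y <= b] (nbhs x) --> u x.
Proof.
move=> a0 x hx.
have sub : [set y | a <= y <= b] `<=` `[0, +oo[.
  by move=> y /andP[ay _]; rewrite /= in_itv /= andbT (le_trans a0 ay).
have := continuous_subspaceW sub ucont.
move/subspace_continuousP; apply => //.
Qed.

Lemma quotU t z : (fun h => h^-1 *: (u (t + h) - u t)) @ 0^'+ --> - z ->
  u (t + h) @[h --> 0^'+] --> u t.
Proof.
move=> hD.
have h1 : u t + h *: (h^-1 *: (u (t + h) - u t)) @[h --> 0^'+] --> u t + 0 *: (- z).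
  apply: cvgD; first exact: cvg_cst.
  apply: cvgZ => //.
  by apply: cvg_at_right_filter; exact: cvg_id.
rewrite scale0r addr0 in h1.
apply: cvg_trans _ h1; apply: near_eq_cvg; near=> h.
have h0 : 0 < h by near: h; exact: nbhs_right_gt.
by rewrite scalerA mulfV ?gt_eqF // scale1r addrC subrK.
Unshelve. all: by end_near. Qed.

Lemma quot_phi t z : (fun h => h^-1 *: (u (t + h) - u t)) @ 0^'+ --> - z ->
  (fun h => h^-1 * (ip (u (t + h)) (u (t + h)) - ip (u t) (u t))) @ 0^'+
    --> - (2 * ip z (u t)).
Proof.
move=> hD.
have -> : (fun h => h^-1 * (ip (u (t + h)) (u (t + h)) - ip (u t) (u t))) =
   (fun h => ip (h^-1 *: (u (t + h) - u t)) (u (t + h) + u t)).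
  apply/funext => h; rewrite ipZl ipBl !ipDr (ipC (u t) (u (t + h))).
  congr (_ * _); ring.
have -> : - (2 * ip z (u t)) = ip (- z) (u t + u t).
  by rewrite ipNl ipDr; ring.
apply: ip_cvg => //.
apply: cvgD; [exact: quotU hD | exact: cvg_cst].
Qed.

Lemma quot_lin n t z : (fun h => h^-1 *: (u (t + h) - u t)) @ 0^'+ --> - z ->
  (fun h => h^-1 * (ip (u (t + h)) n - ip (u t) n)) @ 0^'+ --> - ip z n.
Proof.
move=> hD.
have -> : (fun h => h^-1 * (ip (u (t + h)) n - ip (u t) n)) =
   (fun h => ip (h^-1 *: (u (t + h) - u t)) n).
  by apply/funext => h; rewrite ipZl ipBl.
rewrite -ipNl; apply: ip_cvg => //; exact: cvg_cst.
Qed.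

Lemma quot_N (g : R -> R) t L :
  (fun h => h^-1 * (g (t + h) - g t)) @ 0^'+ --> L ->
  (fun h => h^-1 * (- g (t + h) - - g t)) @ 0^'+ --> - L.
Proof.
move=> H.
have -> : (fun h => h^-1 * (- g (t + h) - - g t)) =
  (fun h => - (h^-1 * (g (t + h) - g t))).
  by apply/funext => h; ring.
exact: cvgN.
Qed.

Lemma u_orth t : 0 <= t -> orth ip (nullJ J) (u t).
Proof.
move=> t0 n hn.
have f0 : ip (u 0) n = 0 by rewrite u0; case: hf => + _; apply.
have [<-//|tn0] := eqVneq 0 t.
have tpos : 0 < t by rewrite lt_neqAle tn0 t0.
have cont_g : forall x, 0 <= x <= t ->
    (fun s => ip (u s) n) @ within [set y | 0 <= y <= t] (nbhs x) --> ip (u x) n.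
  by move=> x hx; apply: ip_cvg => //; [exact: ucont_ab | exact: cvg_cst].
have hz0 : forall s, 0 < s -> exists z,
    (fun h => h^-1 * (ip (u (s + h)) n - ip (u s) n)) @ 0^'+ --> - ip z n /\ ip z n = 0.
  move=> s s0; have [z [[hz _] hD]] := uder s0.
  by exists z; split; [exact: quot_lin | exact: subdiff_orth hz hn].
have h1 : ip (u t) n <= ip (u 0) n.
  apply: dini tpos cont_g _ => s /andP[s0 _] e e0.
  have [z [hq hz]] := hz0 s s0.
  by apply: (@rdiff_le (fun s => ip (u s) n) _ _ _ hq); rewrite hz oppr0.
have h2 : - ip (u t) n <= - ip (u 0) n.
  apply: (@dini (fun s => - ip (u s) n)) tpos _ _.
    by move=> x hx; apply: cvgN; exact: cont_g.
  move=> s /andP[s0 _] e e0.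
  have [z [hq hz]] := hz0 s s0.
  apply: (@rdiff_le (fun s => - ip (u s) n) _ _ _ (@quot_N (fun s => ip (u s) n) _ _ hq)); by rewrite hz !oppr0.
by apply/eqP; rewrite eq_le; apply/andP; split; move: h1 h2; rewrite f0; lra.
Qed.

Lemma subgrad_ip_ge0 t z : subdiff ip J (u t) z -> 0 <= ip z (u t).
Proof.
move=> hz; have [r [Jr r0]] := subdiff_fin hz.
apply: le_trans (subdiff_euler hz Jr).
by rewrite mulr_ge0 // (le_trans ler01) //; case/andP: hp.
Qed.

Lemma u_noninc s t : 0 <= s -> s <= t -> `|u t| <= `|u s|.
Proof.
move=> s0 st; have [->//|st'] := eqVneq s t.
have lt : s < t by rewrite lt_neqAle st' st.
suff H : ip (u t) (u t) <= ip (u s) (u s).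
  by rewrite !ipxx ler_sqr ?nnegrE // in H.
apply: (@dini (fun r => ip (u r) (u r)) s t lt).
  by move=> x hx; apply: ip_cvg => //; exact: ucont_ab.
move=> r /andP[sr _] e e0.
have r0 : 0 < r by apply: le_lt_trans sr.
have [z [[hz _] hD]] := uder r0.
apply: (@rdiff_le (fun r => ip (u r) (u r)) _ _ _ (quot_phi hD)).
apply: le_lt_trans e0.
by rewrite oppr_le0 mulr_ge0 // subgrad_ip_ge0.
Qed.

Lemma within_epsV (A : set R) x : u @ within A (nbhs x) --> u x ->
  forall e, 0 < e -> exists2 d, 0 < d & forall y, A y -> `|x - y| < d -> `|u x - u y| < e.
Proof.
move=> /cvgrPdist_lt H e e0; have := H e e0.
rewrite near_withinE => /nbhs_ballP [d /= d0 Hd].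
by exists d => // y Ay xy; apply: Hd.
Qed.

Lemma exists_t0 : exists2 t, 0 < t & u t != 0.
Proof.
have fn0 : f != 0 by case: hf => _ /eqP.
have := ucont_ab (b := 1) (lexx 0) (x := 0) ltac:(by rewrite lexx ler01).
move/within_epsV => /(_ `|f|) [|d d0 Hd]; first by rewrite normr_gt0.
pose y := Num.min 1 (d / 2).
have y0 : 0 < y by rewrite lt_min ltr01 divr_gt0.
have y1 : y <= 1 by apply: ge_min_l.
exists y => //; apply/negP => /eqP uy.
have hy : `|0 - y| < d.
  rewrite sub0r normrN ger0_norm ?(ltW y0) //.
  apply: le_lt_trans (ge_min_r _ _) _.
  by rewrite ltr_pdivrMr // ltr_pMr // ltr1n.
have := Hd y ltac:(by rewrite /= (ltW y0) y1) hy.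
by rewrite uy u0 subr0 ltxx.
Qed.

Lemma lam_le t z r : 0 < t -> u t != 0 -> subdiff ip J (u t) z -> J (u t) = r%:E ->
  (lambda1 ip p J <= (p * r * (`|u t| `^ p)^-1)%:E)%E.
Proof.
move=> t0 ut hz Jr.
have H0u : H0 ip J (u t) by split; [exact: u_orth (ltW t0) | move/eqP: ut].
rewrite EFinM EFinM -Jr.
by apply: ereal_inf_lbound; exists (u t).
Qed.

Lemma lam_fin : exists2 l, lambda1 ip p J = l%:E & 0 < l.
Proof.
have [t0 t0p ut0] := exists_t0.
have [z [[hz _] _]] := uder t0p.
have [r [Jr r0]] := subdiff_fin hz.
have := lam_le t0p ut0 hz Jr.
move: hl; case: (lambda1 ip p J) => [l| |] //.
by move=> l0 _; exists l => //; rewrite -lte_fin.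
Qed.

Lemma lam_bound t z l : lambda1 ip p J = l%:E -> 0 < t -> u t != 0 ->
  subdiff ip J (u t) z -> l * `|u t| `^ p <= ip z (u t).
Proof.
move=> hl1 t0 ut hz.
have [r [Jr r0]] := subdiff_fin hz.
have := lam_le t0 ut hz Jr; rewrite hl1 lee_fin => h.
have np : 0 < `|u t| `^ p by rewrite powR_gt0 // normr_gt0.
apply: le_trans (subdiff_euler hz Jr).
by rewrite -ler_pdivlMr.
Qed.

Lemma sq_pow x : 0 <= x -> (x ^+ 2) `^ ((2 - p) / 2) = x `^ (2 - p).
Proof.
move=> x0; rewrite -(powR_mulrn 2 x0) -powRrM; congr (_ `^ _).
by field.
Qed.

Lemma sq_pow_mul x : 0 < x -> (x ^+ 2) `^ ((2 - p) / 2) * x `^ p = x ^+ 2.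
Proof.
move=> x0; rewrite sq_pow ?ltW // -powRD; last by apply/implyP => _; exact: lt0r_neq0.
by rewrite subrK powR_mulrn // ltW.
Qed.

Lemma extinction l : lambda1 ip p J = l%:E -> 0 < l ->
  forall t, `|f| `^ (2 - p) / ((2 - p) * l) <= t -> u t = 0.
Proof.
move=> hl1 l0.
set T := `|f| `^ (2 - p) / ((2 - p) * l).
case/andP: hp => p1 p2.
have p2' : 0 < 2 - p by rewrite subr_gt0.
have fn0 : f != 0 by case: hf => _ /eqP.
have Tpos : 0 < T by rewrite divr_gt0 ?powR_gt0 ?normr_gt0 // mulr_gt0.
suff uT : u T = 0.
  move=> t Tt; apply/eqP; rewrite -normr_eq0 eq_le normr_ge0 andbT.
  by have := u_noninc (ltW Tpos) Tt; rewrite uT normr0.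
have [//|uT] := eqVneq (u T) 0.
exfalso.
have pos : forall s, 0 <= s <= T -> 0 < `|u s|.
  move=> s /andP[s0 sT].
  by apply: lt_le_trans (u_noninc s0 sT); rewrite normr_gt0.
pose q := (2 - p) / 2.
have hq : 0 <= q <= 1 by apply/andP; split; rewrite /q; lra.
pose phi s := ip (u s) (u s).
have phiE : forall s, phi s = `|u s| ^+ 2 by move=> s; rewrite /phi ipxx.
pose g s := phi s `^ q + (2 - p) * l * s.
have hd : g T <= g 0; last first.
  move: hd; rewrite /g !phiE mulr0 addr0 u0 /q !sq_pow //.
  have -> : (2 - p) * l * T = `|f| `^ (2 - p).
    by rewrite /T; field; rewrite gt_eqF // ?mulr_gt0 ?gt_eqF.
  have : 0 < `|u T| `^ (2 - p) by rewrite powR_gt0 // pos // lexx ltW.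
  lra.
apply: (@dini g 0 T Tpos).
- move=> x hx.
  apply: cvgD.
    apply: (@continuous_cvg _ _ _ _ _ phi (fun y => y `^ q)).
      by apply: powR_cont; rewrite phiE exprn_gt0 // pos.
    by apply: ip_cvg => //; apply: ucont_ab => //; rewrite lexx.
  apply: cvgM; first exact: cvg_cst.
  exact: cvg_within.
- move=> s /andP[s0 sT] e e0.
  have [z [[hz _] hD]] := uder s0.
  have us0 : 0 < `|u s| by apply: pos; rewrite ltW ?ltW.
  have hb := lam_bound hl1 s0 (ltac:(by rewrite -normr_gt0)) hz.
  set N := `|u s| in us0 hb.
  pose a := phi s.
  have aE : a = N ^+ 2 by rewrite /a phiE.
  have a0 : 0 < a by rewrite aE exprn_gt0.
  pose K := q * (a `^ q / a).
  have q0 : 0 < q by rewrite /q divr_gt0.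
  have qa : 0 < a `^ q / a by apply: divr_gt0 => //; exact: powR_gt0.
  have K0 : 0 < K by apply: mulr_gt0.
  pose Dq := - (2 * ip z (u s)).
  have id1 : a `^ q * N `^ p = a by rewrite aE /q sq_pow_mul.
  pose C := 2 * q * (a `^ q / a).
  have C0 : 0 < C by apply: mulr_gt0 => //; apply: mulr_gt0.
  have KDe : K * Dq = - (C * ip z (u s)) by rewrite /K /Dq /C; ring.
  have E2 : C * (l * N `^ p) = (2 - p) * l.
    have -> : C * (l * N `^ p) = (2 - p) * l * (a `^ q * N `^ p) / a.
      by rewrite /C /q; field; rewrite gt_eqF.
    by rewrite id1 mulfK // gt_eqF.
  have C1 := ler_wpM2l (ltW C0) hb.
  have KD : K * Dq <= - ((2 - p) * l) by move: C1; rewrite KDe -E2; lra.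
  have ev1 := @rdiff_le (fun r => ip (u r) (u r)) _ _ _ (quot_phi hD) (ltac:(by rewrite ltrDl divr_gt0) : Dq < Dq + e / K).
  near=> h.
  have h0 : 0 < h by near: h; exact: nbhs_right_gt.
  have hT : h < T - s by near: h; apply: nbhs_right_lt; rewrite subr_gt0.
  have c2 : phi (s + h) - phi s <= (Dq + e / K) * h by near: h; exact: ev1.
  have b0 : 0 < phi (s + h).
    by rewrite phiE exprn_gt0 // pos // addr_ge0 ?ltW //=; move: hT; lra.
  have c1 := powR_concave a0 b0 hq.
  rewrite -/K in c1.
  have c3 : K * (phi (s + h) - a) <= K * ((Dq + e / K) * h) by rewrite ler_pM2l.
  have c4 : K * ((Dq + e / K) * h) = K * Dq * h + e * h.
    by field; rewrite gt_eqF.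
  have c5 : K * Dq * h <= - ((2 - p) * l) * h by rewrite ler_pM2r.
  rewrite /g -/a.
  move: c1 c3 c4 c5; lra.
Unshelve. all: by end_near. Qed.
End Main.

Unset Implicit Arguments.
Set Strict Implicit.

Theorem theorem2 (R : realType) (V : completeNormedModType R)
    (ip : V -> V -> R) (p : R) (J : V -> \bar R) (f : V) (u : R -> V) :
  is_inner_product ip ->
  1 <= p < 2 ->
  convex_fun J ->
  lower_semicontinuous J ->
  proper_fun J ->
  closure (dom J) = setT ->
  abs_homogeneous p J ->
  (0 < lambda1 ip p J)%E ->
  H0 ip J f ->
  brezis_flow ip J f u ->
  (Tex u <= (`|f| `^ (2 - p))%:E / ((2 - p)%:E * lambda1 ip p J))%E /\
  (Tex u < +oo)%E.
Proof.
move=> hip hp hconv _ hprop _ hhom hl hf hu.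
have [l hl1 l0] := lam_fin hip hconv hprop hhom hl hf hu.
have ext := extinction hip hp hconv hprop hhom hf hu hl1 l0.
set T := `|f| `^ (2 - p) / ((2 - p) * l) in ext.
case/andP: (hp) => p1 p2.
have p2' : 0 < 2 - p by rewrite subr_gt0.
have fn0 : f != 0 by case: hf => _ /eqP.
have Tpos : 0 < T by rewrite divr_gt0 ?powR_gt0 ?normr_gt0 // mulr_gt0.
have hTex : (Tex u <= T%:E)%E.
  by apply: ereal_inf_lbound; exists T => //; split => // t Tt; exact: ext.
split.
  have nz : (2 - p) * l != 0 by rewrite gt_eqF // mulr_gt0.
  by rewrite hl1 -EFinM inver (negbTE nz) -EFinM.
exact: le_lt_trans hTex (ltey _).
Qed.
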